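(* Let $G$ and $H$ be two connected nontrivial graphs and $S\subseteq V(G\Box H)$. If $V(G^h)\cup V({}^gH)\subseteq\langle S\rangle_C$ for some $g\in V(G)$ and $h\in V(H)$, then $S$ is a cycle hull set of $G\Box H$.
   Context: All graphs are finite, simple and undirected. For a graph $G$ and $S\subseteq V(G)$, the cycle interval $\langle S\rangle$ consists of the vertices of $S$ together with every vertex $w\in V(G)\setminus S$ such that $G[S\cup\{w\}]$ contains a cycle through $w$; $S$ is cycle convex if $\langle S\rangle=S$; the cycle convex hull $\langle S\rangle_C$ is the smallest cycle convex set containing $S$; $S$ is a cycle hull set if $\langle S\rangle_C$ is the whole vertex set. The Cartesian product $G\Box H$ has vertex set $V(G)\times V(H)$, with $(g_1,h_1)\sim(g_2,h_2)$ iff ($g_1\sim g_2$ and $h_1=h_2$) or ($g_1=g_2$ and $h_1\sim h_2$). For $h\in V(H)$, $G^h$ is the subgraph induced by $V(G)\times\{h\}$; for $g\in V(G)$, ${}^gH$ is the subgraph induced by $\{g\}\times V(H)$. A graph is nontrivial if it has at least two vertices. *)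

(* Defs.v *)
From mathcomp Require Import all_boot.
Set Implicit Arguments. Unset Strict Implicit. Unset Printing Implicit Defensive.

Definition simple_graph (T : finType) (e : rel T) : Prop :=
  symmetric e /\ irreflexive e.

Definition connected_graph (T : finType) (e : rel T) : Prop :=
  forall x y : T, connect e x y.

Definition nontrivial (T : finType) : Prop := 1 < #|T|.

Definition is_cycle (T : finType) (e : rel T) (c : seq T) : bool :=
  [&& 2 < size c, uniq c & cycle e c].

(* G[A] contains a cycle through w : a cycle all of whose vertices lie in A and
   which contains w (induced subgraph: edges of G among vertices of A). *)
Definition cycle_through_in (T : finType) (e : rel T) (A : {set T}) (w : T) : Prop :=
  exists c : seq T, [/\ is_cycle e c, w \in c & all (fun v => v \in A) c].

Definition in_cycle_interval (T : finType) (e : rel T) (S : {set T}) (w : T) : Prop :=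
  w \in S \/ (w \notin S /\ cycle_through_in e (w |: S) w).

Definition cycle_convex (T : finType) (e : rel T) (S : {set T}) : Prop :=
  forall w, in_cycle_interval e S w -> w \in S.

(* membership in the cycle convex hull <S>_C : belonging to every cycle convex
   superset of S (the hull is the smallest cycle convex set containing S). *)
Definition in_cycle_hull (T : finType) (e : rel T) (S : {set T}) (x : T) : Prop :=
  forall C : {set T}, S \subset C -> cycle_convex e C -> x \in C.

Definition cycle_hull_set (T : finType) (e : rel T) (S : {set T}) : Prop :=
  forall x : T, in_cycle_hull e S x.

Definition cart_rel (T1 T2 : finType) (e1 : rel T1) (e2 : rel T2) : rel (T1 * T2) :=
  fun u v => (e1 u.1 v.1 && (u.2 == v.2)) || ((u.1 == v.1) && e2 u.2 v.2).

Definition layerG (T1 T2 : finType) (h : T2) : {set T1 * T2} := [set u | u.2 == h].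
Definition layerH (T1 T2 : finType) (g : T1) : {set T1 * T2} := [set u | u.1 == g].

(* Main.v *)
Require Import Defs.
From mathcomp Require Import all_boot.

Lemma conn_ind (T : finType) (e : rel T) (P : T -> Prop) x y :
  P x -> (forall a b, P a -> e a b -> P b) -> connect e x y -> P y.
Proof.
move=> Px step /connectP [p pth ->]; elim: p x Px pth => [|z p IH] x Px //=.
move/andP=> [exz pth]; apply: IH pth; exact: step exz.
Qed.

Lemma square (T1 T2 : finType) (e1 : rel T1) (e2 : rel T2) (C : {set T1 * T2})
  x x' y y' :
  simple_graph e1 -> simple_graph e2 -> cycle_convex (cart_rel e1 e2) C ->
  e1 x x' -> e2 y y' -> (x, y) \in C -> (x', y) \in C -> (x, y') \in C ->
  (x', y') \in C.
Proof.
move=> [s1 i1] [s2 i2] cc exx eyy Hxy Hx'y Hxy'.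
have nx : x != x' by apply/eqP => E; rewrite E i1 in exx.
have ny : y != y' by apply/eqP => E; rewrite E i2 in eyy.
apply: cc; case: (boolP ((x', y') \in C)) => H; [by left | right; split => //].
exists [:: (x, y); (x', y); (x', y'); (x, y')]; split.
- rewrite /is_cycle /= /cart_rel /= !inE !xpair_eqE !eqxx exx eyy s1 s2 exx eyy
    (negbTE nx) (negbTE ny) eq_sym (negbTE nx) eq_sym (negbTE ny) /= !andbT
    ?orbT ?andbF ?orbF //.
- by rewrite !inE eqxx !orbT.
- by rewrite /= !inE eqxx Hxy Hx'y Hxy' !orbT.
Qed.

Theorem mainTheorem6 (T1 T2 : finType) (e1 : rel T1) (e2 : rel T2)
    (S : {set T1 * T2}) :
  simple_graph e1 -> simple_graph e2 ->
  connected_graph e1 -> connected_graph e2 ->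
  nontrivial T1 -> nontrivial T2 ->
  (exists (g : T1) (h : T2),
      forall u : T1 * T2, u \in layerG T1 h :|: layerH T2 g ->
        in_cycle_hull (cart_rel e1 e2) S u) ->
  cycle_hull_set (cart_rel e1 e2) S.
Proof.
move=> sg1 sg2 c1 c2 _ _ [g [h Hl]] [x y] C SC cc.
have inC u : u \in layerG T1 h :|: layerH T2 g -> u \in C.
  by move=> /Hl; apply.
pose P a := forall b, (a, b) \in C.
suff : P x by apply.
apply: (@conn_ind _ e1 P g x _ _ (c1 g x)).
  by move=> b; apply: inC; rewrite !inE eqxx orbT.
move=> a a' Pa eaa' b.
apply: (@conn_ind _ e2 (fun b => (a', b) \in C) h b _ _ (c2 h b)).
  by apply: inC; rewrite !inE eqxx.
move=> c c' Hc ecc'.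
exact: (@square _ _ e1 e2 C a a' c c' sg1 sg2 cc eaa' ecc' (Pa c) Hc (Pa c')).
Qed.
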